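(* Let $S=\{\rho_1=0<\rho_2<\cdots\}$ be an Arf numerical semigroup with conductor $c=\rho_r$. Let $d$ be an odd integer with $1\le d\le 2r-3$, write $d=2t+1$, and put $p_t=c+\rho_{t+1}-1$. Then $$\{\rho\in[0,p_t]\cap S:\ \beta(\rho)\ge t+1\}=\{\rho_{t+1}+\rho_{t+1},\ \rho_{t+1}+\rho_{t+2},\ \dots,\ \rho_{t+1}+\rho_{r-1}\}.$$
   Context: A numerical semigroup is a submonoid $S$ of $(\mathbb{N}_0,+)$ with finite complement, with elements listed increasingly. $S$ is Arf if $\rho_i+\rho_j-\rho_k\in S$ for all positive integers $i\ge j\ge k$. The conductor $c$ is the smallest integer such that all integers $\ge c$ lie in $S$, with $c=\rho_r$. For $\rho\in S$: $A[\rho]=\{p\in S:\ \rho-p\in S\}$ and $\beta(\rho)=\max\{j\ge1:\ \rho_1,\dots,\rho_j\in A[\rho]\ \text{and}\ 2\rho_j\le\rho\}$. *)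

(* Defs.v *)
From mathcomp Require Import all_boot.
Set Implicit Arguments. Unset Strict Implicit. Unset Printing Implicit Defensive.

(* The field [nsg_bound] is some witness that every n >= nsg_bound lies in S;
   all derived notions below are independent of the chosen witness. *)
Record numsg := NumSG {
  nsg_mem : pred nat;
  nsg_bound : nat;
  nsg_0 : nsg_mem 0;
  nsg_add : forall a b, nsg_mem a -> nsg_mem b -> nsg_mem (a + b);
  nsg_cofinite : forall n, nsg_bound <= n -> nsg_mem n }.

(* rho S i = the i-th element of S listed increasingly, 1-indexed
   (rho S 1 = 0).  The i-th element is < nsg_bound S + i, so the list below
   contains it. *)
Definition rho (S : numsg) (i : nat) : nat :=
  nth 0 [seq x <- iota 0 (nsg_bound S + i) | nsg_mem S x] i.-1.

(* conductor: least c such that every integer >= c lies in S *)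
Definition conductor_prop (S : numsg) (c : nat) : bool :=
  all (nsg_mem S) (iota c (nsg_bound S - c)).

Lemma conductor_ex (S : numsg) : exists c, conductor_prop S c.
Proof.
  exists (nsg_bound S); by rewrite /conductor_prop subnn.
Qed.

Definition conductor (S : numsg) : nat := ex_minn (conductor_ex S).

Definition Arf (S : numsg) : Prop :=
  forall i j k, 1 <= k -> k <= j -> j <= i ->
    nsg_mem S (rho S i + rho S j - rho S k).

Definition inA (S : numsg) (x p : nat) : bool :=
  [&& nsg_mem S p, p <= x & nsg_mem S (x - p)].

Definition beta_cond (S : numsg) (x j : nat) : bool :=
  all (fun i => inA S x (rho S i)) (iota 1 j) && (2 * rho S j <= x).

(* beta(x) = max { j >= 1 : beta_cond }.  Since rho_j >= j - 1, any such j
   satisfies j <= x + 1, so the max over [1, x+1] is the max over all j. *)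
Definition beta (S : numsg) (x : nat) : nat :=
  \max_(1 <= j < x.+2 | beta_cond S x j) j.

(* Main.v *)
Require Import Defs.
From mathcomp Require Import all_boot.
From mathcomp Require Import zify.

Section Aux.
Variable S : numsg.

Definition L (N : nat) : seq nat := [seq x <- iota 0 N | nsg_mem S x].

Lemma L_ext N1 N2 i : N1 <= N2 -> i < size (L N1) -> nth 0 (L N1) i = nth 0 (L N2) i.
Proof.
move=> le hi; rewrite /L -(subnKC le) iotaD filter_cat nth_cat.
by rewrite /L in hi; rewrite hi.
Qed.

Lemma L_size N : N - nsg_bound S <= size (L N).
Proof.
case: (leqP (nsg_bound S) N) => h; last first.
  by have -> : N - nsg_bound S = 0 by lia.
rewrite /L -(subnKC h) iotaD filter_cat size_cat add0n.
have -> : [seq x <- iota (nsg_bound S) (N - nsg_bound S) | nsg_mem S x]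
   = iota (nsg_bound S) (N - nsg_bound S).
  apply/all_filterP/allP => y; rewrite mem_iota => /andP[h1 _].
  exact: nsg_cofinite.
rewrite size_iota; have -> : nsg_bound S + (N - nsg_bound S) - nsg_bound S = N - nsg_bound S by lia.
exact: leq_addl.
Qed.

Lemma L_sorted N : sorted ltn (L N).
Proof. apply: sorted_filter; [exact: ltn_trans | exact: iota_ltn_sorted]. Qed.

Lemma rhoN i N : 1 <= i -> nsg_bound S + i <= N -> rho S i = nth 0 (L N) i.-1.
Proof.
move=> i1 hN; rewrite /rho -/(L _); apply: L_ext => //; case: i i1 {hN} => // i _ /=.
have := L_size (nsg_bound S + i.+1); lia.
Qed.

Lemma rho_mem i : 1 <= i -> nsg_mem S (rho S i).
Proof.
case: i => // i i1; rewrite (@rhoN i.+1 (nsg_bound S + i.+1)) //=.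
have hs := L_size (nsg_bound S + i.+1).
have : nth 0 (L (nsg_bound S + i.+1)) i \in L (nsg_bound S + i.+1).
  apply: mem_nth; move: hs; rewrite addKn; exact.
by rewrite mem_filter => /andP[].
Qed.

Lemma rho_lt {i j} : 1 <= i -> i < j -> rho S i < rho S j.
Proof.
case: i => // i; case: j => // j _ ij; set N := nsg_bound S + j.+1.
rewrite (@rhoN i.+1 N) ?(@rhoN j.+1 N) //=; try lia.
have hs := L_size N.
apply: (sorted_ltn_nth ltn_trans 0 (L_sorted N)); rewrite ?inE /=; move: hs; rewrite /N addKn; lia.
Qed.

Lemma rho_le {i j} : 1 <= i -> i <= j -> rho S i <= rho S j.
Proof.
move=> i1; rewrite leq_eqVlt => /orP[/eqP->//|ij].
exact: (ltnW (rho_lt i1 ij)).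
Qed.

Lemma rho_ge {i} : 1 <= i -> i.-1 <= rho S i.
Proof.
elim: i => [//|i IH] _.
case: i IH => [//|i] IH.
have := rho_lt (i:=i.+1) (j:=i.+2) erefl (ltnSn _).
have := IH erefl; simpl; lia.
Qed.

Lemma rho_surj y : nsg_mem S y -> exists2 k, 1 <= k & rho S k = y.
Proof.
move=> hy; set N := y.+1.
have yin : y \in L N by rewrite mem_filter hy mem_iota; lia.
set k0 := index y (L N).
have hk : k0 < size (L N) by rewrite index_mem.
have hsz : size (L N) <= N by rewrite /L size_filter -[X in _ <= X](size_iota 0 N) count_size.
exists k0.+1 => //.
rewrite (@rhoN k0.+1 (nsg_bound S + N + 1)) //=; last lia.
by rewrite -(@L_ext N) ?nth_index //; lia.
Qed.

Lemma cond_down x j j' : 1 <= j' -> j' <= j -> beta_cond S x j -> beta_cond S x j'.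
Proof.
move=> j1 jj /andP[/allP ha hb]; apply/andP; split.
  apply/allP => i; rewrite mem_iota => hi; apply: ha; rewrite mem_iota; lia.
have := rho_le j1 jj; lia.
Qed.

Lemma beta_iff x t : t.+1 <= beta S x <-> beta_cond S x t.+1.
Proof.
split.
  case hc: (beta_cond S x t.+1) => //.
  move=> h; exfalso.
  have : beta S x <= t.
    apply/bigmax_leqP_seq => j; rewrite mem_index_iota => /andP[j1 _] cj.
    case: (leqP j t) => // tj.
    by rewrite (@cond_down x j t.+1 erefl tj cj) in hc.
  lia.
move=> hc; rewrite /beta; apply: (@leq_bigmax_seq _ _ _ (fun j => j) t.+1) => //.
rewrite mem_index_iota; case/andP: hc => _ h.
have := rho_ge (i:=t.+1) erefl; simpl; lia.
Qed.

End Aux.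

Theorem mainTheorem14 (S : numsg) (r d t : nat) :
  Arf S ->
  1 <= r -> conductor S = rho S r ->
  1 <= d -> d <= 2 * r - 3 -> d = 2 * t + 1 ->
  forall x : nat,
    (x <= conductor S + rho S t.+1 - 1 /\ nsg_mem S x /\ t.+1 <= beta S x) <->
    (exists2 k, t.+1 <= k <= r - 1 & x = rho S t.+1 + rho S k).
Proof.
move=> hArf r1 -> d1 d2 dt x.
have tr : t.+2 <= r by lia.
have rtr := rho_lt S (i:=t.+1) (j:=r) erefl tr.
rewrite beta_iff; split.
  move=> [hx [hm /andP[/allP ha hb]]].
  have := ha t.+1; rewrite mem_iota => /(_ ltac:(lia)) /and3P[_ h1 h2].
  have [k k1 hk] := rho_surj S _ h2.
  exists k; last by lia.
  apply/andP; split.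
    case: (leqP t.+1 k) => // kt.
    have := rho_lt S k1 kt; lia.
  case: (leqP k (r - 1)) => // kr.
  have := rho_le S (i:=r) (j:=k) r1 ltac:(lia); lia.
move=> [k /andP[k1 k2] ->].
have rk := rho_lt S (i:=k) (j:=r) ltac:(lia) ltac:(lia).
have rtk := rho_le S (i:=t.+1) (j:=k) erefl k1.
split; first lia.
split; first by apply: nsg_add; apply: (rho_mem S _); lia.
apply/andP; split; last lia.
apply/allP => i; rewrite mem_iota => /andP[i1 i2].
have ri := rho_le S (i:=i) (j:=t.+1) i1 ltac:(lia).
apply/and3P; split.
- exact: (rho_mem S _).
- lia.
- have := hArf k t.+1 i i1 ltac:(lia) k1.
  by rewrite addnC.
Qed.
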